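(* Let $P(o,o'\mid b,b')$, with inputs $b,b'\in\{0,1\}$ and outputs $o,o'\in\{\mathrm{accept},\mathrm{reject}\}$, be a conditional probability distribution satisfying no-signalling in both directions, i.e. $\sum_{o'}P(o,o'\mid b,b')$ does not depend on $b'$ and $\sum_{o}P(o,o'\mid b,b')$ does not depend on $b$. Define $p_d := P(\mathrm{accept},\mathrm{accept}\mid b=d,b'=d)$ for $d\in\{0,1\}$ and $\alpha := P(\mathrm{accept},\mathrm{accept}\mid b=0,b'=1)$. Then $p_0+p_1\le 1+\alpha$.
   Context: Interpretation: $b$ and $b'$ are the bits that two non-communicating agents (Bob and Brian) are instructed to open, and $o$, $o'$ are the outcomes of Alice's separate acceptance tests on Bob's and on Brian's opening, respectively. *)

(* Defs.v *)
From Stdlib Require Import Reals.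
Open Scope R_scope.

Inductive outcome := accept | reject.

(* A conditional probability distribution P(o,o' | b,b'),
   inputs b b' : bool (bits 0/1 as false/true). *)
Definition is_cond_distr (P : outcome -> outcome -> bool -> bool -> R) : Prop :=
  (forall o o' b b', 0 <= P o o' b b') /\
  (forall b b', P accept accept b b' + P accept reject b b'
              + P reject accept b b' + P reject reject b b' = 1).

Definition no_signalling (P : outcome -> outcome -> bool -> bool -> R) : Prop :=
  (forall o b b1 b2, P o accept b b1 + P o reject b b1 = P o accept b b2 + P o reject b b2) /\
  (forall o' b' b1 b2, P accept o' b1 b' + P reject o' b1 b' = P accept o' b2 b' + P reject o' b2 b').

(* Main.v *)
Require Import Defs.
From Stdlib Require Import Reals Lra.
Open Scope R_scope.

Theorem lemma1 (P : outcome -> outcome -> bool -> bool -> R) :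
  is_cond_distr P -> no_signalling P ->
  P accept accept false false + P accept accept true true
    <= 1 + P accept accept false true.
Proof.
  intros [Hn Hs] [Ha Hb].
  pose proof (Ha accept false false true).
  pose proof (Hb accept true false true).
  pose proof (Hs false true).
  pose proof (Hn accept reject false false).
  pose proof (Hn reject accept true true).
  pose proof (Hn reject reject false true).
  lra.
Qed.
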